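(* Let $\pi=\pi_1\cdots\pi_n$ be a permutation of $\{1,\dots,n\}$. The Schröder insertion tableau $P(\pi)$ has a single row if and only if for all $1\le i\le n$: (1) if $i$ is odd, then $\pi_i$ is a left-to-right maximum of $\pi$, i.e. $\pi_i>\pi_j$ for all $j<i$; (2) if $i$ is even, then $\pi_i$ is a left-to-right maximum of the sequence obtained from $\pi$ by deleting $\pi_{i-1}$, i.e. $\pi_i>\pi_j$ for all $j<i$ with $j\ne i-1$.
   Context: A Schröder tableau consists of rows $1,2,\dots$; row $r$ has $\lambda_r$ cells at positions $1,\dots,\lambda_r$ (with $\lambda_1\ge\lambda_2\ge\cdots$), each filled with a number. Cells at odd positions are upper triangles, cells at even positions are lower triangles; positions $2m-1$ and $2m$ of a row are twins (they form one square). The Schröder insertion tableau $P(\pi)$ is built as follows. Start with $P$ having one row containing $\pi_1$ at position 1. For $k=2,\dots,n$, insert $\alpha=\pi_k$ into row $i=1$ by the rule: if row $i$ is empty or $\alpha$ is larger than all its entries, place $\alpha$ in a new cell at the end of row $i$ and stop. Otherwise let $j$ be the position in row $i$ of the smallest entry larger than $\alpha$. If $j$ is even (lower triangle): remove the entry $\beta$ at position $j$, write $\alpha$ there, and insert $\beta$ into row $i+1$ by the same rule. If $j$ is odd (upper triangle) and position $j+1$ exists in row $i$ with entry $\beta$: move the entry of position $j$ to position $j+1$, write $\alpha$ at position $j$, and insert $\beta$ into row $i+1$ by the same rule. If $j$ is odd and $j$ is the last position of row $i$: move the entry of position $j$ into a new cell at position $j+1$ at the end of row $i$, write $\alpha$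 at position $j$, and stop. The final $P$ is $P(\pi)$. *)

(* Defs.v *)
From mathcomp Require Import all_boot.
Set Implicit Arguments. Unset Strict Implicit. Unset Printing Implicit Defensive.

(* The cell at (1-indexed) position j of a row is stored at list index j-1;
   so odd positions (upper triangles) are even list indices and even
   positions (lower triangles) are odd list indices. *)
Definition tableau := seq (seq nat).

(* the smallest entry of [r] larger than [a] (default 0 if none) *)
Definition min_above (a : nat) (r : seq nat) : nat :=
  foldr (fun x m => if (a < x) && ((m == 0) || (x < m)) then x else m) 0 r.

Definition row_insert (a : nat) (r : seq nat) : seq nat * option nat :=
  if all (fun x => x < a) r then (rcons r a, None)
  else
    let k := index (min_above a r) r in    (* 0-based index; position j = k+1 *)
    if odd k then                          (* j even : lower triangle *)
      (set_nth 0 r k a, Some (nth 0 r k))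
    else if k.+1 < size r then
      (set_nth 0 (set_nth 0 r k.+1 (nth 0 r k)) k a, Some (nth 0 r k.+1))
    else
      (rcons (set_nth 0 r k a) (nth 0 r k), None).

Fixpoint tab_insert (a : nat) (t : tableau) : tableau :=
  match t with
  | [::] => [:: [:: a]]
  | r :: t' =>
      let (r', ob) := row_insert a r in
      match ob with
      | None => r' :: t'
      | Some b => r' :: tab_insert b t'
      end
  end.

Definition schroder_P (pi : seq nat) : tableau :=
  match pi with
  | [::] => [::]
  | p1 :: rest => foldl (fun t a => tab_insert a t) [:: [:: p1]] rest
  end.

Definition is_perm_of (n : nat) (pi : seq nat) : Prop :=
  perm_eq pi (iota 1 n).

(* Main.v *)
Require Import Defs.
From mathcomp Require Import all_boot.
From Stdlib Require Import Setoid.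

Lemma min_above_cons a x r : min_above a (x :: r) =
  if (a < x) && ((min_above a r == 0) || (x < min_above a r)) then x else min_above a r.
Proof. by []. Qed.

Lemma min_above0 a r : ~~ has (fun x => a < x) r -> min_above a r = 0.
Proof. elim: r => // x r IH; rewrite min_above_cons /= negb_or => /andP[/negbTE hx /IH h]; by rewrite hx. Qed.

Lemma min_above_sorted a r : sorted ltn r -> has (fun x => a < x) r ->
  min_above a r = nth 0 r (find (fun x => a < x) r).
Proof.
elim: r => // x r IH hs; rewrite min_above_cons /=.
case: (boolP (a < x)) => hx /=.
  case: (boolP (has (fun x => a < x) r)) => hr; last by rewrite min_above0.
  rewrite IH //; last exact: path_sorted hs.
  rewrite ifT //; apply/orP; right.
  have := order_path_min ltn_trans hs => /allP; apply.
  by apply: mem_nth; rewrite -has_find.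
move=> hr; rewrite IH //; exact: path_sorted hs.
Qed.

Lemma set_nth_last (r0 : seq nat) x a : set_nth 0 (rcons r0 x) (size r0) a = rcons r0 a.
Proof. by elim: r0 => //= y r0 ->. Qed.

Lemma sorted_rcons_ltn r x : sorted ltn (rcons r x) = sorted ltn r && all (fun y => y < x) r.
Proof.
rewrite !(sorted_pairwise ltn_trans) -cats1 pairwise_cat /= andbT andbC.
by rewrite allrel1r.
Qed.

Lemma step a r : sorted ltn r -> a \notin r -> 0 < size r ->
  ((row_insert a r).2 == None) = (if odd (size r) then all (fun y => y < a) (take (size r).-1 r)
                                   else all (fun y => y < a) r)
  /\ ((row_insert a r).2 = None -> sorted ltn (row_insert a r).1 /\ perm_eq (row_insert a r).1 (rcons r a)).
Proof.
case/lastP: r => [//|r0 x] hs ha _.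
rewrite size_rcons /= -{2 4}cats1 take_size_cat // cats1.
rewrite /row_insert.
case: (boolP (all (fun y => y < a) (rcons r0 x))) => hall.
  split; first by move: hall; rewrite all_rcons => /andP[_ ->]; case: ifP.
  by move=> _ /=; rewrite sorted_rcons_ltn hs hall perm_refl.
have hhas : has (fun y => a < y) (rcons r0 x).
  move: hall; rewrite -has_predC => /hasP [y hy hya]; apply/hasP; exists y => //.
  have hne : a != y by apply/eqP => e; move: ha; rewrite e hy.
  by rewrite ltn_neqAle hne /= leqNgt.
have hu := sorted_uniq ltn_trans ltnn hs.
rewrite (min_above_sorted _ _ hs hhas) index_uniq //; last by rewrite -has_find.
set k := find _ (rcons r0 x).
case: (boolP (has (fun y => a < y) r0)) => h0.
  have hk : k < size r0 by rewrite /k -cats1 find_cat h0 -has_find.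
  rewrite size_rcons ltnS hk.
  split; last by case: ifP.
  have -> : (if odd k then (set_nth 0 (rcons r0 x) k a, Some (nth 0 (rcons r0 x) k))
     else (set_nth 0 (set_nth 0 (rcons r0 x) k.+1 (nth 0 (rcons r0 x) k)) k a,
      Some (nth 0 (rcons r0 x) k.+1))).2 == None = false by case: ifP.
  case: ifP => _ //.
  symmetry; apply/negbTE; move: h0; apply: contraL => /allP H; apply/hasPn => y /H.
  by rewrite -leqNgt; apply: ltnW.
have hx : a < x by move: hhas; rewrite -cats1 has_cat (negbTE h0) /= orbF.
have hk : k = size r0 by rewrite /k -cats1 find_cat (negbTE h0) /= hx addn0.
rewrite hk size_rcons ltnn.
have hr0 : all (fun y => y < a) r0.
  apply/allP => y hy; move/hasPn: h0 => /(_ y hy); rewrite -leqNgt leq_eqVlt => /orP[/eqP e|//].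
  by move: ha; rewrite -e mem_rcons in_cons hy orbT.
case: (boolP (odd (size r0))) => ho.
  by split.
rewrite /= hr0; split => // _.
rewrite set_nth_last nth_rcons ltnn eqxx.
rewrite !sorted_rcons_ltn all_rcons hx hr0 /=.
move: hs; rewrite sorted_rcons_ltn => /andP[-> ->]; split => //.
rewrite -!cats1 -!catA perm_cat2l /=.
by rewrite (perm_catC [:: a] [:: x]).
Qed.

Lemma schroder_rcons s a : s != [::] -> schroder_P (rcons s a) = tab_insert a (schroder_P s).
Proof. by case: s => // p rest _; rewrite rcons_cons /= foldl_rcons. Qed.

Lemma size_tab_insert a t : size t <= size (tab_insert a t).
Proof.
elim: t a => //= r t IH a; case: (row_insert a r) => r' [b|] //=.
by rewrite ltnS.
Qed.

Lemma size_P_pos s : s != [::] -> 0 < size (schroder_P s).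
Proof.
case: s => // p rest _ /=.
have : 0 < size [:: [:: p]] by [].
elim: rest [:: [:: p]] => //= b rest IH t ht; apply: IH.
exact: leq_trans ht (size_tab_insert _ _).
Qed.

Definition cnd (pi : seq nat) (i : nat) : Prop :=
  (odd i -> forall j, 1 <= j < i -> nth 0 pi j.-1 < nth 0 pi i.-1) /\
  (~~ odd i -> forall j, 1 <= j < i -> j != i.-1 -> nth 0 pi j.-1 < nth 0 pi i.-1).

Lemma all_take_nth (pi : seq nat) k a : k <= size pi ->
  all (fun y => y < a) (take k pi) <-> (forall j, 1 <= j <= k -> nth 0 pi j.-1 < a).
Proof.
move=> hk; split.
  move=> /(all_nthP 0) H j /andP[hj1 hj2].
  have hj : j.-1 < size (take k pi) by rewrite size_take_min (minn_idPl hk); case: j hj1 hj2.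
  by have := H _ hj; rewrite nth_take //; case: j hj1 hj2 {hj}.
move=> H; apply/(all_nthP 0) => i; rewrite size_take_min (minn_idPl hk) => hi.
by rewrite nth_take // (H i.+1).
Qed.

Lemma cnd_equiv pi m r : 0 < m -> m < size pi -> perm_eq r (take m pi) -> sorted ltn r -> cnd pi m ->
  cnd pi m.+1 <-> (if odd m then all (fun y => y < nth 0 pi m) (take m.-1 r)
                   else all (fun y => y < nth 0 pi m) r).
Proof.
move=> hm hmn hr hs hc.
set a := nth 0 pi m.
have hsz : size r = m by rewrite (perm_size hr) size_take hmn.
case: (boolP (odd m)) => ho.
  have -> : cnd pi m.+1 <-> (forall j, 1 <= j <= m.-1 -> nth 0 pi j.-1 < a).
    rewrite /cnd /= ho /=; split.
      move=> [_ H] j /andP[h1 h2]; apply: H => //.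
        by rewrite h1 /= ltnS; apply: leq_trans h2 (leq_pred _).
      by rewrite neq_ltn; apply/orP; left; move: h2; case: (m) hm.
    move=> H; split => // _ j /andP[h1 h2] hj; apply: H; rewrite h1 /=.
    by move: h2 hj; case: (m) hm => // m' _; rewrite ltnS leq_eqVlt => /orP[/eqP ->|]; rewrite ?eqxx.
  rewrite -all_take_nth; last by apply: leq_trans (leq_pred _) (ltnW hmn).
  case/lastP: r hr hs hsz => [|r0 x] hr hs hsz; first by move: hm; rewrite -hsz.
  have hm1 : m.-1 < size pi by apply: leq_ltn_trans (leq_pred _) hmn.
  move: hr; rewrite -{1}(prednK hm) (take_nth 0 hm1) => hr.
  set y := nth 0 pi m.-1 in hr.
  move: hsz; rewrite size_rcons => hsz.
  have -> : take m.-1 (rcons r0 x) = r0 by rewrite -hsz /= -cats1 take_size_cat.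
  have hmax : all (fun z => z < y) (take m.-1 pi).
    apply/all_take_nth; first exact: ltnW.
    move=> j /andP[h1 h2]; case: hc => H _; apply: H => //.
    by rewrite h1 /=; move: h2; case: (m) hm.
  move: hs; rewrite sorted_rcons_ltn => /andP[_ hxs].
  have hxy : x = y.
    apply/eqP; apply/negPn; apply/negP => hne.
    have hx : x \in rcons (take m.-1 pi) y by rewrite -(perm_mem hr) mem_rcons mem_head.
    have hy : y \in rcons r0 x by rewrite (perm_mem hr) mem_rcons mem_head.
    move: hx hy; rewrite !mem_rcons !in_cons (negbTE hne) eq_sym (negbTE hne) /= => hx hy.
    have := allP hmax _ hx; have := allP hxs _ hy.
    by move=> h1 h2; move: (ltn_trans h1 h2); rewrite ltnn.
  move: hr; rewrite hxy -!cats1 perm_cat2r => hr.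
  by rewrite (perm_all _ hr).
have -> : cnd pi m.+1 <-> (forall j, 1 <= j <= m -> nth 0 pi j.-1 < a).
  rewrite /cnd /= ho /=; split.
    by move=> [H _] j hj; apply: H.
  by move=> H; split => // _ j hj; apply: H.
rewrite -all_take_nth; last exact: ltnW.
by rewrite (perm_all _ hr).
Qed.

Theorem mainTheorem7 (n : nat) (pi : seq nat) :
  1 <= n ->
  is_perm_of n pi ->
  (size (schroder_P pi) = 1 <->
   forall i, 1 <= i <= n ->
     (odd i -> forall j, 1 <= j < i -> nth 0 pi j.-1 < nth 0 pi i.-1) /\
     (~~ odd i -> forall j, 1 <= j < i -> j != i.-1 ->
                    nth 0 pi j.-1 < nth 0 pi i.-1)).
Proof.
move=> hn hp.
have hsz : size pi = n by rewrite (perm_size hp) size_iota.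
have hu : uniq pi by rewrite (perm_uniq hp) iota_uniq.
suff H : forall m, 0 < m <= n ->
   (size (schroder_P (take m pi)) = 1 <-> forall i, 1 <= i <= m -> cnd pi i) /\
   (size (schroder_P (take m pi)) = 1 -> exists r, schroder_P (take m pi) = [:: r] /\
        sorted ltn r /\ perm_eq r (take m pi)).
  have [H1 _] := H n (introT andP (conj hn (leqnn n))).
  move: H1; rewrite -{1}hsz take_size => H1.
  exact: H1.
elim=> [//|m IH] /andP[_ hm].
case: (posnP m) => [->|hm0].
  case: pi hsz hu {hp IH hm} => [|p rest] hsz hu; first by move: hn; rewrite -hsz.
  rewrite /= take0 /=; split; last by move=> _; exists [:: p].
  split => // _ i /andP[h1 h2].
  have -> : i = 1 by apply/eqP; rewrite eqn_leq h1 h2.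
  by split => // _ j /andP[j1 j2]; move: (leq_trans j1 j2).
have hmn : m < size pi by rewrite hsz.
have [IH1 IH2] := IH (introT andP (conj hm0 (ltnW hm))).
have hsne : take m pi != [::] by rewrite -size_eq0 size_take hmn -lt0n.
rewrite (take_nth 0 hmn) schroder_rcons //.
set s := take m pi; set a := nth 0 pi m.
have hall : (forall i, 1 <= i <= m.+1 -> cnd pi i) <->
            (forall i, 1 <= i <= m -> cnd pi i) /\ cnd pi m.+1.
  split.
    move=> H; split; last by apply: H; rewrite leqnn.
    by move=> i /andP[h1 h2]; apply: H; rewrite h1 (leq_trans h2).
  move=> [H1 H2] i /andP[h1]; rewrite leq_eqVlt => /orP[/eqP -> //|h2].
  by apply: H1; rewrite h1 -ltnS.
rewrite hall.
case: (eqVneq (size (schroder_P s)) 1) => hP.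
  have [r [hr [hs hperm]]] := IH2 hP.
  have hszr : size r = m by rewrite (perm_size hperm) size_take hmn.
  have ha : a \notin r.
    rewrite (perm_mem hperm) /s in_take; last exact: mem_nth.
    by rewrite /a index_uniq // ltnn.
  have hcm : cnd pi m by apply: (proj1 IH1 hP); rewrite hm0 leqnn.
  have [E1 E2] := step a r hs ha (ltac:(by rewrite hszr)).
  have CE := cnd_equiv pi m r hm0 hmn hperm hs hcm.
  rewrite hszr in E1.
  rewrite hr /=.
  case E: (row_insert a r) => [r' ob]; rewrite E /= in E1 E2.
  clear E; case: ob E1 E2 => [b|] E1 E2.
    split => //; split => // -[_ /CE]; rewrite -E1 //.
  split.
    split => // _; split; first by apply/IH1.
    by apply/CE; rewrite -E1.
  move=> _; exists r'; have [h1 h2] := E2 erefl; split => //; split => //.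
  by apply: perm_trans h2 _; rewrite -!cats1 perm_cat2r.
have hpos := size_P_pos s hsne.
have h2 : 2 <= size (schroder_P s) by rewrite ltn_neqAle eq_sym hP hpos.
have h3 := leq_trans h2 (size_tab_insert a (schroder_P s)).
split; last by move=> e; move: h3; rewrite e.
split; first by move=> e; move: h3; rewrite e.
by move=> [/IH1 e _]; move: hP; rewrite e eqxx.
Qed.
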